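(* Let $G$ be a finitely generated virtually nilpotent group and let $A$ be a finite subgroup of $\operatorname{Aut}(G)$ of cardinality $n$. Then the $n$-valued coset group $X=(G,A)$ has polynomial growth: for a finite generating set of $X$ there are constants $C,k>0$ such that $|B(e,r)|\le Cr^k$ for all $r\ge1$, where $B(e,r)$ is the ball of radius $r$ centred at the unit $e$ of $X$.
   Context: An $n$-valued group is a set $X$ with a map $*:X\times X\to\operatorname{Sym}^nX$ ($n$-multi-sets, i.e. unordered $n$-tuples with multiplicities) that is associative (the $n^2$-multi-sets $[x*(y*z)_1,\dots,x*(y*z)_n]$ and $[(x*y)_1*z,\dots,(x*y)_n*z]$ coincide), has a unit $e$ with $e*x=x*e=[x,\dots,x]$, and has an inverse map $\operatorname{inv}$ with $e\in\operatorname{inv}(x)*x$, $e\in x*\operatorname{inv}(x)$. Coset group: for a group $G$ and a finite subgroup $A\le\operatorname{Aut}(G)$ with $|A|=n$, let $X=G/A$ be the set of $A$-orbits and $\pi:G\to X$ the projection; the $n$-valued multiplication is $\pi(g)*\pi(h)=[\pi(g\,a(h)) : a\in A]$, the unit is $\pi(e_G)$ and $\operatorname{inv}(\pi(g))=\pi(g^{-1})$. For a multi-set $M$, $\operatorname{Set}(M)$ is the set of its distinct elements. $S\subseteq X$ generates $X$ if every element lies in $\operatorname{Set}(s_1*\dots*s_m)$ for some $s_i\in S$. The ball of radius $r$ centred at $x$ with respect to $S$ is $B(x,r)=\{y:\exists m\le r,\ s_{i_1},\dots,s_{i_m}\in S,\ y\in\operatorname{Set}(x*s_{i_1}*\dots*s_{i_m})\}$.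 A group is virtually nilpotent if it has a nilpotent subgroup of finite index. *)

(* Defs.v *)
From Stdlib Require Import Reals List Arith.
Import ListNotations.
Open Scope R_scope.

Record group := Group {
  carrier :> Type;
  gmul : carrier -> carrier -> carrier;
  gone : carrier;
  ginv : carrier -> carrier;
  gmulA : forall x y z, gmul x (gmul y z) = gmul (gmul x y) z;
  gmul1 : forall x, gmul gone x = x;
  gmulV : forall x, gmul (ginv x) x = gone
}.

Section GroupDefs.
Variable G : group.

Definition is_subgroup (H : G -> Prop) : Prop :=
  H (gone G) /\
  (forall x y, H x -> H y -> H (gmul G x y)) /\
  (forall x, H x -> H (ginv G x)).

Definition gen (P : G -> Prop) : G -> Prop :=
  fun x => forall H, is_subgroup H -> (forall y, P y -> H y) -> H x.

Definition finitely_generated : Prop :=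
  exists T : list G, forall x, gen (fun y => In y T) x.

Definition commg (x y : G) : G :=
  gmul G (gmul G (ginv G x) (ginv G y)) (gmul G x y).

Fixpoint lcs (H : G -> Prop) (i : nat) : G -> Prop :=
  match i with
  | O => H
  | S j => gen (fun z => exists x y, lcs H j x /\ H y /\ z = commg x y)
  end.

Definition nilpotent_subgroup (H : G -> Prop) : Prop :=
  is_subgroup H /\ exists c, forall x, lcs H c x -> x = gone G.

Definition finite_index (H : G -> Prop) : Prop :=
  exists T : list G, forall g, exists t, In t T /\ H (gmul G (ginv G t) g).

Definition virtually_nilpotent : Prop :=
  exists H, nilpotent_subgroup H /\ finite_index H.

Definition is_aut (f : G -> G) : Prop :=
  (forall x y, f (gmul G x y) = gmul G (f x) (f y)) /\
  (forall x y, f x = f y -> x = y) /\ (forall y, exists x, f x = y).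

(* A finite subgroup A of Aut(G) of cardinality n, enumerated without
   repetition as act 0, ..., act (n-1). *)
Definition finite_aut_subgroup (n : nat) (act : nat -> G -> G) : Prop :=
  (forall i, (i < n)%nat -> is_aut (act i)) /\
  (forall i j, (i < n)%nat -> (j < n)%nat ->
      (forall x, act i x = act j x) -> i = j) /\
  (exists i, (i < n)%nat /\ forall x, act i x = x) /\
  (forall i j, (i < n)%nat -> (j < n)%nat -> exists k, (k < n)%nat /\
      forall x, act k x = act i (act j x)) /\
  (forall i, (i < n)%nat -> exists k, (k < n)%nat /\
      forall x, act k (act i x) = x).

Section Coset.
Variables (n : nat) (act : nat -> G -> G).

(* x and y lie in the same A-orbit, i.e. pi x = pi y in X = G/A *)
Definition orb (x y : G) : Prop := exists i, (i < n)%nat /\ act i x = y.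

(* Set(pi(g) * pi(h)) = { pi(g a(h)) : a in A }, as a subset of G closed
   under orb *)
Definition cmul (g h : G) : G -> Prop :=
  fun y => exists i, (i < n)%nat /\ orb (gmul G g (act i h)) y.

(* Set(M * pi(s)) where P = Set(M) *)
Definition setmul (P : G -> Prop) (s : G) : G -> Prop :=
  fun y => exists z, P z /\ cmul z s y.

Definition iprod (x : G) (l : list G) : G -> Prop :=
  fold_left setmul l (orb x).

(* S (given by representatives) generates X *)
Definition generates (S : list G) : Prop :=
  forall x, exists s1 l, In s1 S /\ Forall (fun s => In s S) l /\
    iprod s1 l x.

Definition ball (S : list G) (x : G) (r : nat) : G -> Prop :=
  fun y => exists l, (length l <= r)%nat /\ Forall (fun s => In s S) l /\
    iprod x l y.

(* |B| <= b: B is covered by at most b orbits *)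
Definition card_le (B : G -> Prop) (b : R) : Prop :=
  exists L : list G, INR (length L) <= b /\
    forall y, B y -> exists t, In t L /\ orb t y.

End Coset.
End GroupDefs.

(* Main.v *)
Require Import Defs.
From Stdlib Require Import Reals List Arith Lia ClassicalEpsilon.
Import ListNotations.
Local Open Scope nat_scope.

Section Basics.
Variable G : group.
Local Notation "x ** y" := (gmul G x y) (at level 40, left associativity).
Local Notation "1" := (gone G).
Local Notation inv := (ginv G).

Lemma mulgV x : x ** inv x = 1.
Proof.
  rewrite <- (gmul1 G (x ** inv x)).
  rewrite <- (gmulV G (inv x)) at 1.
  rewrite <- gmulA, (gmulA G (inv x) x (inv x)), gmulV, gmul1, gmulV. reflexivity.
Qed.

Lemma mulg1 x : x ** 1 = x.
Proof. rewrite <- (gmulV G x), gmulA, mulgV, gmul1. reflexivity. Qed.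

Lemma mulg_cancel x y z : x ** y = x ** z -> y = z.
Proof.
  intro H. rewrite <- (gmul1 G y), <- (gmul1 G z), <- (gmulV G x), <- !gmulA, H. reflexivity.
Qed.

Lemma invg_uniq x y : x ** y = 1 -> y = inv x.
Proof. intro H. apply (mulg_cancel x). rewrite H, mulgV. reflexivity. Qed.

Lemma invgK x : inv (inv x) = x.
Proof. symmetry. apply invg_uniq. apply gmulV. Qed.

Lemma invgM x y : inv (x ** y) = inv y ** inv x.
Proof.
  symmetry. apply invg_uniq.
  rewrite <- gmulA, (gmulA G y), mulgV, gmul1, mulgV. reflexivity.
Qed.

Lemma invg1 : inv 1 = 1.
Proof. symmetry. apply invg_uniq. apply gmul1. Qed.

Definition prod (l : list G) : G := fold_right (gmul G) 1 l.

Lemma prod_app l1 l2 : prod (l1 ++ l2) = prod l1 ** prod l2.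
Proof.
  induction l1 as [|x l IH]; simpl. rewrite gmul1; reflexivity.
  rewrite IH, gmulA. reflexivity.
Qed.

Lemma prod_hom (f : G -> G) : (forall x y, f (x ** y) = f x ** f y) -> f 1 = 1 ->
  forall l, f (prod l) = prod (map f l).
Proof. intros Hm H1 l; induction l; simpl; [exact H1| rewrite Hm, IHl; reflexivity]. Qed.

Lemma prod_inv l : inv (prod l) = prod (rev (map inv l)).
Proof.
  induction l; simpl. apply invg1.
  rewrite invgM, IHl, prod_app. simpl. rewrite mulg1. reflexivity.
Qed.

End Basics.
Section Count.
Variable G : group.
Local Notation "x ** y" := (gmul G x y) (at level 40, left associativity).
Local Notation "1" := (gone G).
Local Notation inv := (ginv G).

Definition W (L : list G) (r : nat) (y : G) : Prop :=
  exists l, length l <= r /\ (forall x, In x l -> In x L) /\ y = prod G l.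

Definition ncard (B : G -> Prop) (b : nat) : Prop :=
  exists L : list G, length L <= b /\ forall y, B y -> In y L.

Lemma ncard_mono (B B' : G -> Prop) b b' : (forall y, B y -> B' y) -> b' <= b ->
  ncard B' b' -> ncard B b.
Proof. intros H Hb [L [HL HB]]. exists L. split. lia. auto. Qed.

Lemma length_flat_map_const {A B : Type} (f : A -> list B) k (l : list A) :
  (forall x, length (f x) = k) -> length (flat_map f l) = length l * k.
Proof. intro H; induction l; simpl; [reflexivity|rewrite length_app, H, IHl; lia]. Qed.

Lemma ncard_image2 (B B1 B2 : G -> Prop) (f : G -> G -> G) b1 b2 :
  (forall y, B y -> exists x1 x2, B1 x1 /\ B2 x2 /\ y = f x1 x2) ->
  ncard B1 b1 -> ncard B2 b2 -> ncard B (b1 * b2).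
Proof.
  intros H [L1 [H1 C1]] [L2 [H2 C2]].
  exists (flat_map (fun x1 => map (f x1) L2) L1). split.
  - rewrite (length_flat_map_const _ (length L2)); [|intro; apply length_map].
    apply Nat.mul_le_mono; auto.
  - intros y By. destruct (H y By) as [x1 [x2 [B1x [B2x ->]]]].
    apply in_flat_map. exists x1. split; auto. apply in_map. auto.
Qed.

Lemma ncard_image (B B1 : G -> Prop) (f : G -> G) b1 :
  (forall y, B y -> exists x1, B1 x1 /\ y = f x1) ->
  ncard B1 b1 -> ncard B b1.
Proof.
  intros H [L1 [H1 C1]]. exists (map f L1). rewrite length_map. split; auto.
  intros y By. destruct (H y By) as [x [Bx ->]]. apply in_map; auto.
Qed.

Lemma W_mono L L' r r' y : (forall x, In x L -> In x L') -> r <= r' -> W L r y -> W L' r' y.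
Proof. intros HL Hr [l [h1 [h2 h3]]]. exists l. repeat split; auto. lia. Qed.

Lemma W_app L r1 r2 y1 y2 : W L r1 y1 -> W L r2 y2 -> W L (r1 + r2) (y1 ** y2).
Proof.
  intros [l1 [a1 [b1 ->]]] [l2 [a2 [b2 ->]]]. exists (l1 ++ l2).
  rewrite length_app, prod_app. repeat split; auto. lia.
  intros x Hx; apply in_app_or in Hx; destruct Hx; auto.
Qed.

End Count.
Section CosetRed.
Variable G : group.
Local Notation "x ** y" := (gmul G x y) (at level 40, left associativity).
Local Notation "1" := (gone G).
Local Notation inv := (ginv G).
Variables (n : nat) (act : nat -> G -> G).
Hypothesis hA : finite_aut_subgroup G n act.

Definition AS (S : list G) : list G :=
  flat_map (fun s => map (fun i => act i s) (seq 0 n)) S.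

Lemma act_hom i : i < n -> forall x y, act i (x ** y) = act i x ** act i y.
Proof. intros Hi. destruct hA as [H _]. apply (H i Hi). Qed.

Lemma act_one i : i < n -> act i 1 = 1.
Proof.
  intro Hi. apply (mulg_cancel G (act i 1)). rewrite <- act_hom by auto.
  rewrite gmul1, mulg1. reflexivity.
Qed.

Lemma act_surj i : i < n -> forall y, exists x, act i x = y.
Proof. intros Hi. destruct hA as [H _]. apply (H i Hi). Qed.

Lemma step_orb (S : list G) k w z s i i' y :
  W G (AS S) k w -> orb G n act w z -> In s S -> i < n -> i' < n ->
  act i' (z ** act i s) = y ->
  exists w', W G (AS S) (k + 1) w' /\ orb G n act w' y.
Proof.
  intros HW [j [Hj Hjw]] Hs Hi Hi' Hy.
  destruct hA as [Haut [_ [_ [Hcomp Hinv]]]].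
  destruct (Hinv j Hj) as [j' [Hj' Hjj']].
  destruct (Hcomp j' i Hj' Hi) as [k1 [Hk1 Ek1]].
  destruct (Hcomp i' j Hi' Hj) as [k2 [Hk2 Ek2]].
  assert (E1 : act j (act k1 s) = act i s).
  { destruct (act_surj j Hj (act i s)) as [x Hx].
    rewrite Ek1, <- Hx, Hjj'. reflexivity. }
  exists (w ** act k1 s). split.
  - apply W_app; auto. exists [act k1 s]. simpl. repeat split; auto.
    intros x [<-|[]]. unfold AS. apply in_flat_map. exists s. split; auto.
    apply in_map_iff. exists k1. split; auto. apply in_seq. lia.
    rewrite mulg1. reflexivity.
  - exists k2. split; auto. rewrite Ek2, act_hom, E1, Hjw by auto. exact Hy.
Qed.

Lemma fold_orb (S : list G) : forall l P k,
  (forall y, P y -> exists w, W G (AS S) k w /\ orb G n act w y) ->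
  Forall (fun s => In s S) l ->
  forall y, fold_left (setmul G n act) l P y ->
  exists w, W G (AS S) (k + length l) w /\ orb G n act w y.
Proof.
  induction l as [|s l IH]; intros P k HP HF y Hy.
  - simpl in *. rewrite Nat.add_0_r. auto.
  - simpl in Hy. inversion HF; subst.
    destruct (IH (setmul G n act P s) (k + 1)) with (y := y) as [w [Hw Ho]]; auto.
    + intros y' [z [Pz [i [Hi [i' [Hi' Hy']]]]]].
      destruct (HP z Pz) as [w [Hw Ho]].
      exact (step_orb S k w z s i i' y' Hw Ho H1 Hi Hi' Hy').
    + exists w. split; auto. replace (k + length (s :: l)) with (k + 1 + length l) by (simpl; lia). auto.
Qed.

Lemma ball_sub (S : list G) r y :
  ball G n act S 1 r y -> exists w, W G (AS S) r w /\ orb G n act w y.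
Proof.
  intros [l [Hl [HF Hy]]].
  destruct (fold_orb S l (orb G n act 1) 0) with (y := y) as [w [Hw Ho]]; auto.
  - intros y' [i [Hi Hy']]. exists 1. split.
    + exists []. simpl. repeat split; auto. intros x [].
    + exists i. split; auto.
  - exists w. split; auto. eapply W_mono; [| |exact Hw]; auto.
Qed.

End CosetRed.
Section FinIdx.
Variable G : group.
Local Notation "x ** y" := (gmul G x y) (at level 40, left associativity).
Local Notation "1" := (gone G).
Local Notation inv := (ginv G).

Lemma W_single L x : In x L -> W G L 1 x.
Proof. intro Hx. exists [x]. simpl. repeat split; auto. intros y [<-|[]]; auto. rewrite mulg1; reflexivity. Qed.

Lemma fi_red (H : G -> Prop) (T : list G)
  (hT : forall g, exists t, In t T /\ H (inv t ** g)) (Sg : list G) :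
  exists F : list G, (forall x, In x F -> H x) /\
    forall r b, ncard G (W G F r) b -> ncard G (W G Sg r) (length T * b).
Proof.
  pose (tau := fun g => proj1_sig (constructive_indefinite_description _ (hT g))).
  assert (Htau : forall g, In (tau g) T /\ H (inv (tau g) ** g)).
  { intro g. unfold tau. destruct (constructive_indefinite_description _ (hT g)). simpl. auto. }
  exists (flat_map (fun s => map (fun t => inv (tau (s ** t)) ** (s ** t)) T) Sg).
  split.
  - intros x Hx. apply in_flat_map in Hx. destruct Hx as [s [_ Hx]].
    apply in_map_iff in Hx. destruct Hx as [t [<- _]]. apply Htau.
  - intros r b Hb.
    assert (Key : forall l, (forall x, In x l -> In x Sg) -> exists t w, In t T /\
        W G (flat_map (fun s => map (fun t => inv (tau (s ** t)) ** (s ** t)) T) Sg) (length l) w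
        /\ prod G l = t ** w ** inv (tau 1)).
    { induction l as [|s l IH]; intro Hl.
      - exists (tau 1), 1. split; [apply Htau|]. split.
        + exists []. simpl. repeat split; auto. intros x [].
        + simpl. rewrite mulg1, mulgV. reflexivity.
      - destruct IH as [t [w [Ht [Hw E]]]]. intros; apply Hl; simpl; auto.
        exists (tau (s ** t)), (inv (tau (s ** t)) ** (s ** t) ** w). split; [apply Htau|]. split.
        + replace (length (s :: l)) with (1 + length l) by reflexivity.
          apply W_app; auto. apply W_single. apply in_flat_map. exists s. split; [apply Hl; simpl; auto|].
          apply in_map_iff. exists t. split; auto.
        + simpl. rewrite E. rewrite !gmulA, mulgV, gmul1. reflexivity. }
    eapply ncard_image2 with (B1 := fun t => In t T) (f := fun t w => t ** w ** inv (tau 1)).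
    + intros y [l [Hl [Hin ->]]]. destruct (Key l Hin) as [t [w [Ht [Hw E]]]].
      exists t, w. split; auto. split; [|exact E]. eapply W_mono; [intros x Hx; exact Hx | exact Hl | exact Hw].
    + exists T. split; auto.
    + exact Hb.
Qed.
End FinIdx.
Section Lcs.
Variable G : group.
Local Notation "x ** y" := (gmul G x y) (at level 40, left associativity).
Local Notation "1" := (gone G).
Local Notation inv := (ginv G).

Lemma gen_subgroup P : is_subgroup G (gen G P).
Proof.
  split; [|split].
  - intros K [h1 _] _. exact h1.
  - intros x y hx hy K hK hP. destruct hK as [h1 [h2 h3]]. apply h2; [apply hx|apply hy]; auto; split; auto.
  - intros x hx K hK hP. destruct hK as [h1 [h2 h3]]. apply h3. apply hx; auto. split; auto.
Qed.

Lemma gen_in P x : P x -> gen G P x.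
Proof. intros Px K _ hP. auto. Qed.

Lemma gen_min P K x : is_subgroup G K -> (forall y, P y -> K y) -> gen G P x -> K x.
Proof. intros hK hP hx. apply hx; auto. Qed.

Lemma gen_mono (P Q : G -> Prop) x : (forall y, P y -> Q y) -> gen G P x -> gen G Q x.
Proof. intros hPQ hx. apply (gen_min P); auto using gen_subgroup. intros y Py. apply gen_in; auto. Qed.

Lemma commg_conj x a : inv a ** x ** a = x ** commg G x a.
Proof. unfold commg. rewrite !gmulA, mulgV, gmul1. reflexivity. Qed.

Variable H : G -> Prop.
Hypothesis hH : is_subgroup G H.

Lemma lcs_subgroup j : is_subgroup G (lcs G H j).
Proof. destruct j; simpl; [exact hH | apply gen_subgroup]. Qed.

Lemma lcs_H j x : lcs G H j x -> H x.
Proof.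
  revert x; induction j as [|j IH]; intros x hx; simpl in *; auto.
  revert hx; apply (gen_min _ H x hH).
  intros z [u [v [hu [hv ->]]]]. destruct hH as [h1 [h2 h3]].
  unfold commg. apply IH in hu. auto.
Qed.

Lemma lcs_dec j x : lcs G H (S j) x -> lcs G H j x.
Proof.
  revert x; induction j as [|j IH]; intros x hx.
  - apply (lcs_H 1). exact hx.
  - simpl in *. eapply gen_mono; [|exact hx].
    intros z [u [v [hu [hv ->]]]]. exists u, v. split; auto.
Qed.

Lemma lcs_le j j' x : j <= j' -> lcs G H j' x -> lcs G H j x.
Proof. intros hle; induction hle; auto. intro hx. apply IHhle, lcs_dec, hx. Qed.

Lemma lcs_comm j x a : lcs G H j x -> H a -> lcs G H (S j) (commg G x a).
Proof. intros hx ha. simpl. apply gen_in. exists x, a. auto. Qed.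

Lemma lcs_inv j x : lcs G H j x -> lcs G H j (inv x).
Proof. destruct (lcs_subgroup j) as [_ [_ h]]. auto. Qed.

End Lcs.
Lemma pow_step j e : 1 <= e -> (j+1)^e + (j+1)^(e-1) <= (j+2)^e.
Proof.
  intro he. destruct e as [|e]; [lia|]. simpl. rewrite Nat.sub_0_r.
  assert ((j+1)^e <= (j+2)^e) by (apply Nat.pow_le_mono_l; lia). nia.
Qed.

Section Chains.
Variable G : group.
Local Notation "x ** y" := (gmul G x y) (at level 40, left associativity).
Local Notation "1" := (gone G).
Local Notation inv := (ginv G).
Variable H : G -> Prop.
Hypothesis hH : is_subgroup G H.
Variable c : nat.
Hypothesis hc : forall x, lcs G H c x -> x = 1.

Definition conj (u z : G) := inv u ** z ** u.
Definition xs (a g : G) (k : nat) : G := Nat.iter k (fun z => commg G z a) g.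

Lemma conj_hom u x y : conj u (x ** y) = conj u x ** conj u y.
Proof. unfold conj. rewrite !gmulA, <- (gmulA G _ u (inv u)), mulgV, mulg1. reflexivity. Qed.

Lemma conj_one u : conj u 1 = 1.
Proof. unfold conj. rewrite mulg1, gmulV. reflexivity. Qed.

Lemma iter_conj_hom j u x y : Nat.iter j (conj u) (x ** y) = Nat.iter j (conj u) x ** Nat.iter j (conj u) y.
Proof. induction j; simpl; auto. rewrite IHj. apply conj_hom. Qed.

Lemma iter_conj_one j u : Nat.iter j (conj u) 1 = 1.
Proof. induction j; simpl; auto. rewrite IHj. apply conj_one. Qed.

Lemma xs_lcs a g m k : H a -> lcs G H m g -> lcs G H (m + k) (xs a g k).
Proof.
  intros ha hg. induction k; simpl. rewrite Nat.add_0_r; auto.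
  rewrite Nat.add_succ_r. apply lcs_comm; auto.
Qed.

Lemma xs_triv a g k : H a -> H g -> c <= k -> xs a g k = 1.
Proof.
  intros ha hg hk. apply hc. apply (lcs_le G H hH c k); auto.
  apply (xs_lcs a g 0 k); auto.
Qed.

Lemma conj_xs a g k : conj a (xs a g k) = xs a g k ** xs a g (S k).
Proof. unfold conj. rewrite commg_conj. reflexivity. Qed.

Lemma conj_chain a g : H a -> H g -> forall j k, exists l : list nat,
  length l <= (j+1)^(c-k) /\ (forall i, In i l -> k <= i < c) /\
  prod G (map (xs a g) l) = Nat.iter j (conj a) (xs a g k).
Proof.
  intros ha hg j. induction j as [|j IH]; intro k.
  - destruct (Nat.lt_ge_cases k c) as [hk|hk].
    + exists [k]. simpl. rewrite Nat.pow_1_l. split; auto. split.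
      * intros i [<-|[]]; lia.
      * apply mulg1.
    + exists []. simpl. split; [lia|]. split; [intros i []|]. rewrite xs_triv; auto.
  - destruct (Nat.lt_ge_cases k c) as [hk|hk].
    + destruct (IH k) as [l1 [h1 [i1 e1]]]. destruct (IH (S k)) as [l2 [h2 [i2 e2]]].
      exists (l1 ++ l2). split; [|split].
      * rewrite length_app. replace (S j + 1) with (j + 2) by lia.
        pose proof (pow_step j (c - k)). replace (c - S k) with (c - k - 1) in h2 by lia. lia.
      * intros i hi. apply in_app_or in hi. destruct hi as [hi|hi]; [apply i1|apply i2 in hi]; auto; lia.
      * rewrite map_app, prod_app, e1, e2. rewrite <- iter_conj_hom, <- conj_xs.
        rewrite Nat.iter_succ_r. reflexivity.
    + exists []. simpl. split; [lia|]. split; [intros i []|].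
      rewrite xs_triv by auto. rewrite iter_conj_one, conj_one. reflexivity.
Qed.

End Chains.
Section Decomp.
Variable G : group.
Local Notation "x ** y" := (gmul G x y) (at level 40, left associativity).
Local Notation "1" := (gone G).
Local Notation inv := (ginv G).

Definition sym (L : list G) := L ++ map inv L.

Variable E0 : list G.

Definition CJ (u v : G) (r : nat) (y : G) : Prop := exists g j, In g (sym E0) /\ j <= r /\
  (y = Nat.iter j (conj G u) g \/ y = Nat.iter j (conj G v) g).
Definition Pw (u v : G) (r : nat) (q : G) : Prop := exists j, j <= r /\
  (q = Nat.iter j (gmul G u) 1 \/ q = Nat.iter j (gmul G v) 1).

Lemma CJ_sym u v r y : CJ u v r y -> CJ v u r y.
Proof. intros [g [j [h1 [h2 h3]]]]. exists g, j. repeat split; auto. tauto. Qed.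

Lemma CJ_mono u v r y : CJ u v r y -> CJ u v (S r) y.
Proof. intros [g [j [h1 [h2 h3]]]]. exists g, j. repeat split; auto. Qed.

Lemma CJ_step u v r y : (forall z, conj G v (conj G u z) = z) ->
  CJ u v r y -> CJ u v (S r) (conj G v y).
Proof.
  intros hvu [g [j [h1 [h2 [->| ->]]]]].
  - destruct j as [|j].
    + exists g, (S O). repeat split; auto; lia.
    + exists g, j. repeat split; auto. lia. left. simpl. apply hvu.
  - exists g, (S j). repeat split; auto. lia.
Qed.

Lemma Pw_sym u v r q : Pw u v r q -> Pw v u r q.
Proof. intros [j [h1 h2]]. exists j. split; auto. tauto. Qed.

Lemma Pw_step u v r q : u ** v = 1 -> Pw u v r q -> Pw u v (S r) (u ** q).
Proof.
  intros huv [j [h1 [->| ->]]].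
  - exists (S j). split; [lia|]. left. reflexivity.
  - destruct j as [|j].
    + exists (S O). split; [lia|]. left. reflexivity.
    + exists j. split; [lia|]. right. simpl. rewrite gmulA, huv, gmul1. reflexivity.
Qed.

Lemma conj_cancel u z : conj G (inv u) (conj G u z) = z.
Proof. unfold conj. rewrite invgK, !gmulA, mulgV, gmul1, <- gmulA, mulgV, mulg1. reflexivity. Qed.

Lemma move u z : u ** z = conj G (inv u) z ** u.
Proof. unfold conj. rewrite invgK, <- gmulA, gmulV, mulg1. reflexivity. Qed.

Lemma move_prod u ws : u ** prod G ws = prod G (map (conj G (inv u)) ws) ** u.
Proof.
  rewrite move. f_equal. apply prod_hom. apply conj_hom. apply conj_one.
Qed.

Lemma decomp a : forall l, (forall x, In x l -> In x (sym (a :: E0))) ->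
  exists ws q, length ws <= length l /\ (forall y, In y ws -> CJ a (inv a) (length l) y) /\
    Pw a (inv a) (length l) q /\ prod G l = prod G ws ** q.
Proof.
  induction l as [|s l IH]; intro hl.
  - exists [], 1. simpl. repeat split; auto. intros y [].
    exists 0. split; auto. rewrite gmul1. reflexivity.
  - destruct IH as [ws [q [h1 [h2 [h3 h4]]]]]. intros x hx; apply hl; simpl; auto.
    assert (hs : In s (sym (a :: E0))) by (apply hl; simpl; auto).
    unfold sym in hs. simpl in hs.
    destruct hs as [<-|hs].
    + exists (map (conj G (inv a)) ws), (a ** q). rewrite length_map. simpl.
      repeat split; [lia| | |].
      * intros y hy. apply in_map_iff in hy. destruct hy as [y' [<- hy']].
        apply CJ_step; [apply conj_cancel|]. auto.
      * apply Pw_step; auto. apply mulgV.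
      * rewrite h4, gmulA, move_prod, gmulA. reflexivity.
    + apply in_app_or in hs. destruct hs as [hs|[<-|hs]].
      * exists (s :: ws), q. simpl. repeat split; [lia| | |].
        -- intros y [<-|hy]. exists s, 0. repeat split; [|lia|]. unfold sym; apply in_or_app; auto. auto.
           apply CJ_mono; auto.
        -- destruct h3 as [j [hj hh]]. exists j. split; auto.
        -- rewrite h4, gmulA. reflexivity.
      * exists (map (conj G a) ws), (inv a ** q). rewrite length_map. simpl.
        repeat split; [lia| | |].
        -- intros y hy. apply in_map_iff in hy. destruct hy as [y' [<- hy']].
           apply CJ_sym. apply CJ_step.
           intro z. pose proof (conj_cancel (inv a) z) as hc. rewrite invgK in hc. exact hc.
           apply CJ_sym. auto.
        -- apply Pw_sym. apply Pw_step. apply gmulV. apply Pw_sym. auto.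
        -- rewrite h4, gmulA, move_prod, invgK, gmulA. reflexivity.
      * exists (s :: ws), q. simpl. repeat split; [lia| | |].
        -- intros y [<-|hy]. exists s, 0. repeat split; [|lia|]. unfold sym; apply in_or_app; auto. auto.
           apply CJ_mono; auto.
        -- destruct h3 as [j [hj hh]]. exists j. split; auto.
        -- rewrite h4, gmulA. reflexivity.
Qed.

End Decomp.
Section Growth.
Variable G : group.
Local Notation "x ** y" := (gmul G x y) (at level 40, left associativity).
Local Notation "1" := (gone G).
Local Notation inv := (ginv G).
Variable H : G -> Prop.
Hypothesis hH : is_subgroup G H.
Variable c : nat.
Hypothesis hc : forall x, lcs G H c x -> x = 1.

Definition Growth (L : list G) : Prop :=
  exists C K, forall r, ncard G (W G (sym G L) r) (C * (S r)^K).

Lemma W_prod L k ws : (forall y, In y ws -> W G L k y) -> W G L (length ws * k) (prod G ws).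
Proof.
  induction ws as [|y ws IH]; intro h; simpl.
  - exists []. simpl. repeat split; auto. intros x [].
  - apply W_app; [apply h; simpl; auto | apply IH; intros; apply h; simpl; auto].
Qed.

Definition chains (a : G) (E0 : list G) : list G :=
  flat_map (fun g => map (xs G a g) (seq 1 c) ++ map (xs G (inv a) g) (seq 1 c)) (sym G E0).

Lemma Hinv x : H x -> H (inv x).
Proof. destruct hH as [_ [_ h]]. auto. Qed.

Lemma chain_W g E r j u : H u -> H g -> j <= r ->
  (forall i, 0 < i < c -> In (xs G u g i) E) -> In g (sym G E) ->
  W G (sym G E) ((S r)^c) (Nat.iter j (conj G u) g).
Proof.
  intros hu hg hj hE hgE.
  destruct (conj_chain G H hH c hc u g hu hg j 0) as [l [h1 [h2 h3]]].
  exists (map (xs G u g) l). rewrite length_map. split; [|split].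
  - rewrite Nat.sub_0_r in h1. eapply Nat.le_trans; [exact h1|]. apply Nat.pow_le_mono_l. lia.
  - intros x hx. apply in_map_iff in hx. destruct hx as [i [<- hi]]. apply h2 in hi.
    destruct i as [|i]; [exact hgE|]. unfold sym. apply in_or_app. left. apply hE. lia.
  - rewrite h3. reflexivity.
Qed.

Lemma CJ_W a E0 E r y : H a -> (forall g, In g (sym G E0) -> H g) ->
  (forall x, In x E0 -> In x E) -> (forall x, In x (chains a E0) -> In x E) ->
  CJ G E0 a (inv a) r y -> W G (sym G E) ((S r)^c) y.
Proof.
  intros ha hE0 hsub hch [g [j [hg [hj [->| ->]]]]].
  - apply chain_W; auto.
    + intros i hi. apply hch. unfold chains. apply in_flat_map. exists g. split; auto.
      apply in_or_app. left. apply in_map. apply in_seq. lia.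
    + unfold sym in *. apply in_app_or in hg. apply in_or_app. destruct hg as [hg|hg]; [left; auto|right].
      apply in_map_iff in hg. destruct hg as [x [<- hx]]. apply in_map. auto.
  - apply chain_W; auto. apply Hinv; auto.
    + intros i hi. apply hch. unfold chains. apply in_flat_map. exists g. split; auto.
      apply in_or_app. right. apply in_map. apply in_seq. lia.
    + unfold sym in *. apply in_app_or in hg. apply in_or_app. destruct hg as [hg|hg]; [left; auto|right].
      apply in_map_iff in hg. destruct hg as [x [<- hx]]. apply in_map. auto.
Qed.

Lemma Pw_card a r : ncard G (Pw G a (inv a) r) (2 * S r).
Proof.
  exists (map (fun j => Nat.iter j (gmul G a) 1) (seq 0 (S r)) ++
          map (fun j => Nat.iter j (gmul G (inv a)) 1) (seq 0 (S r))).
  rewrite length_app, !length_map, !length_seq. split; [lia|].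
  intros q [j [hj [->| ->]]]; apply in_or_app; [left|right];
    apply in_map_iff; exists j; split; auto; apply in_seq; lia.
Qed.

Lemma grow_arith C K c' r : C * S (r * S r ^ c') ^ K * (2 * S r) <= 2 * C * S r ^ (S c' * K + 1).
Proof.
  assert (h1 : S (r * S r ^ c') <= S r ^ S c').
  { simpl. assert (1 <= S r ^ c') by (apply Nat.neq_0_lt_0, Nat.pow_nonzero; lia). nia. }
  assert (h2 : S (r * S r ^ c') ^ K <= S r ^ (S c' * K)).
  { rewrite Nat.pow_mul_r. apply Nat.pow_le_mono_l. exact h1. }
  rewrite Nat.pow_add_r, Nat.pow_1_r.
  replace (2 * C * (S r ^ (S c' * K) * S r)) with (C * S r ^ (S c' * K) * (2 * S r)) by ring.
  apply Nat.mul_le_mono_r, Nat.mul_le_mono_l. exact h2.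
Qed.

Lemma grow_step a E0 E : H a -> (forall g, In g (sym G E0) -> H g) ->
  (forall x, In x E0 -> In x E) -> (forall x, In x (chains a E0) -> In x E) ->
  Growth E -> Growth (a :: E0).
Proof.
  intros ha hE0 hsub hch [C [K hCK]].
  exists (2 * C), (S c * K + 1). intro r.
  eapply ncard_mono; [intros y hy; exact hy | apply grow_arith |].
  apply (ncard_image2 G _ (W G (sym G E) (r * S r ^ c)) (Pw G a (inv a) r) (gmul G)).
  - intros y [l [hl [hin ->]]].
    destruct (decomp G E0 a l hin) as [ws [q [h1 [h2 [h3 h4]]]]].
    exists (prod G ws), q. split; [|split; [|exact h4]].
    + eapply W_mono; [intros x hx; exact hx| |apply W_prod].
      * apply Nat.mul_le_mono. lia. apply Nat.le_refl.
      * intros y hy. eapply W_mono; [intros x hx; exact hx| |eapply CJ_W; eauto].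
        apply Nat.pow_le_mono_l. lia.
    + destruct h3 as [j [hj hh]]. exists j. split; auto. lia.
  - apply hCK.
  - apply Pw_card.
Qed.

End Growth.
Section Core.
Variable G : group.
Local Notation "x ** y" := (gmul G x y) (at level 40, left associativity).
Local Notation "1" := (gone G).
Local Notation inv := (ginv G).
Variable H : G -> Prop.
Hypothesis hH : is_subgroup G H.
Variable c : nat.
Hypothesis hc : forall x, lcs G H c x -> x = 1.

Definition Q m := forall F, (forall g, In g F -> lcs G H m g) -> Growth G F.

Lemma prod_triv l : (forall x, In x l -> x = 1) -> prod G l = 1.
Proof.
  induction l as [|x l IH]; intro h; simpl; auto.
  rewrite IH, (h x). apply gmul1. simpl; auto. intros; apply h; simpl; auto.
Qed.

Lemma Q_c : Q c.
Proof.
  intros F hF. exists (S O), 0. intro r. exists [1]. simpl. split; [lia|].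
  intros y [l [_ [hin ->]]]. left. symmetry. apply prod_triv.
  intros x hx. apply hin in hx. unfold sym in hx. apply in_app_or in hx.
  destruct hx as [hx|hx]; [apply hc; auto|].
  apply in_map_iff in hx. destruct hx as [z [<- hz]]. rewrite (hc z) by auto. apply invg1.
Qed.

Lemma sym_lcs m L : (forall g, In g L -> lcs G H m g) -> forall g, In g (sym G L) -> lcs G H m g.
Proof.
  intros h g hg. unfold sym in hg. apply in_app_or in hg. destruct hg as [hg|hg]; auto.
  apply in_map_iff in hg. destruct hg as [z [<- hz]]. apply lcs_inv; auto.
Qed.

Lemma Q_step m : Q (S m) -> Q m.
Proof.
  intro hQ.
  assert (inner : forall n F1 F2, length F1 = n -> (forall g, In g F1 -> lcs G H m g) ->
     (forall g, In g F2 -> lcs G H (S m) g) -> Growth G (F1 ++ F2)).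
  { induction n as [|n IH]; intros F1 F2 hl h1 h2.
    - destruct F1; [|discriminate]. simpl. apply hQ; auto.
    - destruct F1 as [|a F1']; [discriminate|]. simpl.
      assert (ha : lcs G H m a) by (apply h1; simpl; auto).
      assert (haH : H a) by (apply (lcs_H G H hH m); auto).
      assert (hE0 : forall g, In g (F1' ++ F2) -> lcs G H m g).
      { intros g hg. apply in_app_or in hg. destruct hg as [hg|hg].
        apply h1; simpl; auto. apply lcs_dec; auto. }
      apply (grow_step G H hH c hc a (F1' ++ F2) (F1' ++ (F2 ++ chains G c a (F1' ++ F2)))); auto.
      + intros g hg. apply (lcs_H G H hH m). apply (sym_lcs m (F1' ++ F2)); auto.
      + intros x hx. rewrite app_assoc. apply in_or_app; auto.
      + intros x hx. apply in_or_app; right; apply in_or_app; auto.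
      + apply IH; auto.
        * intros g hg; apply h1; simpl; auto.
        * intros g hg. apply in_app_or in hg. destruct hg as [hg|hg]; auto.
          unfold chains in hg. apply in_flat_map in hg. destruct hg as [g0 [hg0 hg]].
          assert (hm : lcs G H m g0) by (apply (sym_lcs m (F1' ++ F2)); auto).
          apply in_app_or in hg. destruct hg as [hg|hg]; apply in_map_iff in hg;
            destruct hg as [k [<- hk]]; apply in_seq in hk;
            apply (lcs_le G H hH (S m) (m + k)); try lia; apply xs_lcs; auto.
          apply Hinv; auto. }
  intros F hF. rewrite <- (app_nil_r F). apply (inner (length F)); auto.
  intros g [].
Qed.

Lemma Q_0 : Q 0.
Proof.
  assert (forall d, Q (c - d)).
  { induction d as [|d IH]. rewrite Nat.sub_0_r. apply Q_c.
    destruct (Nat.le_gt_cases c d).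
    - replace (c - S d) with (c - d) by lia. auto.
    - apply Q_step. replace (S (c - S d)) with (c - d) by lia. auto. }
  replace 0 with (c - c) by lia. auto.
Qed.

End Core.
Lemma final_arith T C K r : 1 <= r -> T * (C * S r ^ K) <= (T * C * 2 ^ K + 1) * r ^ (S K).
Proof.
  intro hr.
  assert (h1 : S r ^ K <= (2 * r) ^ K) by (apply Nat.pow_le_mono_l; lia).
  rewrite Nat.pow_mul_l in h1.
  assert (h2 : r ^ K <= r ^ S K) by (apply Nat.pow_le_mono_r; lia).
  assert (T * (C * S r ^ K) <= T * C * 2 ^ K * r ^ K).
  { rewrite Nat.mul_assoc. rewrite <- (Nat.mul_assoc (T*C)). apply Nat.mul_le_mono_l. exact h1. }
  assert (T * C * 2 ^ K * r ^ K <= T * C * 2 ^ K * r ^ S K) by (apply Nat.mul_le_mono_l; exact h2).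
  nia.
Qed.

Local Open Scope R_scope.

Theorem mainTheorem2 (G : group) (n : nat) (act : nat -> G -> G)
  (hfg : finitely_generated G) (hvn : virtually_nilpotent G)
  (hA : finite_aut_subgroup G n act)
  (S : list G) (hS : generates G n act S) :
  exists C k : R, 0 < C /\ 0 < k /\
    forall r : nat, (1 <= r)%nat ->
      card_le G n act (ball G n act S (gone G) r) (C * Rpower (INR r) k).
Proof.
  destruct hvn as [H [[hH [c hc]] [T hT]]].
  destruct (fi_red G H T hT (AS G n act S)) as [F [hF hred]].
  destruct (Q_0 G H hH c hc F) as [C [K hCK]].
  { intros g hg. simpl. auto. }
  exists (INR (length T * C * 2 ^ K + 1)%nat), (INR (Datatypes.S K)).
  split; [apply lt_0_INR; lia|]. split; [apply lt_0_INR; lia|].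
  intros r hr.
  assert (hW : ncard G (W G (AS G n act S) r) (length T * (C * Datatypes.S r ^ K))%nat).
  { apply hred. eapply ncard_mono; [|apply Nat.le_refl|apply (hCK r)].
    intros y hy. eapply W_mono; [|apply Nat.le_refl|exact hy].
    intros x hx. unfold sym. apply in_or_app. auto. }
  destruct hW as [L [hL hLc]].
  exists L. split.
  - rewrite Rpower_pow by (apply lt_0_INR; lia).
    rewrite <- pow_INR, <- mult_INR. apply le_INR.
    eapply Nat.le_trans; [exact hL|]. apply final_arith. exact hr.
  - intros y hy. destruct (ball_sub G n act hA S r y hy) as [w [hw ho]].
    exists w. split; auto.
Qed.
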